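(* Let $n\ge1$. Every $\mathbf A\in\mathsf{PMV}_n$ embeds into the Priestley power of its distributive skeleton. That is, there is an injective homomorphism $\mathbf A\hookrightarrow\mathfrak P\mathfrak S(\mathbf A)=\mathbf{P\L}_n[\mathfrak S(\mathbf A)]$; it is the unit of the adjunction $\mathfrak S\dashv\mathfrak P$.
   Context: For $n\ge 1$, the algebra $\mathbf{P\L}_n=\langle\{0,\tfrac1n,\dots,1\},\min,\max,\odot,\oplus,0,1\rangle$ has $x\odot y=\max\{0,x+y-1\}$ and $x\oplus y=\min\{1,x+y\}$. $\mathsf{PMV}_n$ is the variety it generates. - The distributive skeleton is $\mathfrak S(\mathbf A)=\langle\{a\in A:a\oplus a=a\},\wedge,\vee,0,1\rangle$, a bounded distributive lattice. - For a bounded distributive lattice $\mathbf L$, the Priestley power $\mathbf{P\L}_n[\mathbf L]$ is the algebra, under pointwise operations, of continuous order-preserving maps from the Priestley dual space $\mathsf{DL}(\mathbf L,\mathbf 2)$ to the discrete ordered set $\langle\{0,\tfrac1n,\dots,1\},\le\rangle$. The dual space carries the pointwise order and product topology. - $\mathfrak P(\mathbf L)=\mathbf{P\L}_n[\mathbf L]$ defines a functor $\mathsf{DL}\to\mathsf{PMV}_n$ that is right adjoint to $\mathfrak S$. *)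

(* Defs.v *)
From HB Require Import structures.
From mathcomp Require Import all_boot all_order.
From Stdlib Require List.
Set Implicit Arguments.
Unset Strict Implicit.
Unset Printing Implicit Defensive.
Import Order.TTheory.
Local Open Scope order_scope.

Record pmvAlg := PmvAlg {
  car :> Type;
  pmeet : car -> car -> car;
  pjoin : car -> car -> car;
  podot : car -> car -> car;
  poplus : car -> car -> car;
  pzero : car;
  pone : car }.

Inductive term :=
| tVar of nat
| tZero
| tOne
| tMeet of term & term
| tJoin of term & term
| tOdot of term & term
| tOplus of term & term.

Fixpoint eval (A : pmvAlg) (v : nat -> A) (t : term) : A :=
  match t with
  | tVar i => v i
  | tZero => pzero A
  | tOne => pone A
  | tMeet s u => pmeet (eval v s) (eval v u)
  | tJoin s u => pjoin (eval v s) (eval v u)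
  | tOdot s u => podot (eval v s) (eval v u)
  | tOplus s u => poplus (eval v s) (eval v u)
  end.

(* The algebra PL_n, with the element k/n (0 <= k <= n) encoded by k. *)
Definition odotL (n k l : nat) : nat := (k + l - n)%N.   (* max{0, x+y-1} *)
Definition oplusL (n k l : nat) : nat := minn n (k + l). (* min{1, x+y}   *)

Fixpoint evalL (n : nat) (v : nat -> nat) (t : term) : nat :=
  match t with
  | tVar i => v i
  | tZero => 0%N
  | tOne => n
  | tMeet s u => minn (evalL n v s) (evalL n v u)
  | tJoin s u => maxn (evalL n v s) (evalL n v u)
  | tOdot s u => odotL n (evalL n v s) (evalL n v u)
  | tOplus s u => oplusL n (evalL n v s) (evalL n v u)
  end.

Definition PL_identity (n : nat) (s t : term) : Prop :=
  forall v : nat -> nat, (forall i, v i <= n)%N -> evalL n v s = evalL n v t.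

(* A belongs to PMV_n, the variety generated by PL_n, i.e. A satisfies
   every identity valid in PL_n. *)
Definition in_PMV (n : nat) (A : pmvAlg) : Prop :=
  forall s t : term, PL_identity n s t ->
    forall v : nat -> A, eval v s = eval v t.

Definition skel (A : pmvAlg) : Type := {a : A | poplus a a = a}.

(* Points of the Priestley dual DL(S(A), 2): bounded lattice homs
   S(A) -> 2, the operations of S(A) being those of A restricted. *)
Definition skel_dual (A : pmvAlg) (x : skel A -> bool) : Prop :=
  [/\ forall s t u : skel A, sval u = pmeet (sval s) (sval t) -> x u = x s && x t,
      forall s t u : skel A, sval u = pjoin (sval s) (sval t) -> x u = x s || x t,
      forall u : skel A, sval u = pzero A -> x u = false &
      forall u : skel A, sval u = pone A -> x u = true].

Definition lat_dual (d : Order.disp_t) (L : tbDistrLatticeType d)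
    (x : L -> bool) : Prop :=
  [/\ forall a b : L, x (a `&` b) = x a && x b,
      forall a b : L, x (a `|` b) = x a || x b,
      x \bot = false & x \top = true].

(* Priestley powers PL_n[L].  The dual space is the set of x : T -> bool *)
(* satisfying D, with the pointwise order and the subspace topology of    *)
(* the product topology on 2^T.  An element of PL_n[L] is represented by  *)
(* a function phi : (T -> bool) -> nat whose restriction to the dual      *)
(* space is meant (values k <= n encode k/n); two such are equal as       *)
(* elements iff they agree on the dual space.                             *)
(* Continuity into a discrete space = every point has a basic (cylinder)  *)
(* neighbourhood, determined by finitely many coordinates, on which phi   *)
(* is constant.                                                           *)
Definition in_PP (n : nat) (T : Type) (D : (T -> bool) -> Prop)
    (phi : (T -> bool) -> nat) : Prop :=
  [/\ forall x, D x -> (phi x <= n)%N,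
      forall x y, D x -> D y -> (forall a, x a ==> y a) -> (phi x <= phi y)%N &
      forall x, D x -> exists s : list T, forall y, D y ->
          (forall a, List.In a s -> y a = x a) -> phi y = phi x].

Definition PP_eq (T : Type) (D : (T -> bool) -> Prop)
    (phi psi : (T -> bool) -> nat) : Prop :=
  forall x, D x -> phi x = psi x.

Definition PP_hom (n : nat) (A : pmvAlg) (T : Type) (D : (T -> bool) -> Prop)
    (f : A -> (T -> bool) -> nat) : Prop :=
  (forall a, in_PP n D (f a)) /\
  (forall x, D x ->
    [/\ forall a b, f (pmeet a b) x = minn (f a x) (f b x),
        forall a b, f (pjoin a b) x = maxn (f a x) (f b x),
        forall a b, f (podot a b) x = odotL n (f a x) (f b x) &
        forall a b, f (poplus a b) x = oplusL n (f a x) (f b x)] /\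
    f (pzero A) x = 0%N /\ f (pone A) x = n).

Definition skel_lat_hom (A : pmvAlg) (d : Order.disp_t)
    (L : tbDistrLatticeType d) (g : skel A -> L) : Prop :=
  [/\ forall s t u : skel A, sval u = pmeet (sval s) (sval t) -> g u = g s `&` g t,
      forall s t u : skel A, sval u = pjoin (sval s) (sval t) -> g u = g s `|` g t,
      forall u : skel A, sval u = pzero A -> g u = \bot &
      forall u : skel A, sval u = pone A -> g u = \top].

(* eta : A -> PL_n[S(A)] is a universal arrow from A to the functor P:
   for every bounded distributive lattice L and homomorphism
   f : A -> PL_n[L] there is a unique lattice hom g : S(A) -> L with
   f = P(g) o eta, where P(g)(phi) = phi o DL(g,2), i.e.
   P(g)(phi)(y) = phi (y o g).  This is what it means for eta to be
   (the A-component of) the unit of S -| P. *)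
Definition is_unit (n : nat) (A : pmvAlg)
    (eta : A -> (skel A -> bool) -> nat) : Prop :=
  PP_hom n (@skel_dual A) eta /\
  forall (d : Order.disp_t) (L : tbDistrLatticeType d)
         (f : A -> (L -> bool) -> nat),
    PP_hom n (@lat_dual d L) f ->
    exists g : skel A -> L,
      [/\ skel_lat_hom g,
          forall a y, lat_dual y -> f a y = eta a (fun s => y (g s)) &
          forall g' : skel A -> L, skel_lat_hom g' ->
            (forall a y, lat_dual y -> f a y = eta a (fun s => y (g' s))) ->
            forall s, g' s = g s].

(* Main.v *)
Require Import Defs.
From HB Require Import structures.
From mathcomp Require Import all_boot all_order zify.
From mathcomp Require boolp classical_sets.
From Stdlib Require Import Classical ClassicalEpsilon ProofIrrelevance.
Set Implicit Arguments.
Unset Strict Implicit.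
Unset Printing Implicit Defensive.

Section Thr.
Variable n : nat.
Hypothesis hn : (0 < n)%N.

Lemma evalL_le v t : (forall i, v i <= n) -> evalL n v t <= n.
Proof. move=> Hv; elim: t => //= *; rewrite /odotL /oplusL; lia. Qed.

Fixpoint tpow s m := if m is m'.+1 then tOdot s (tpow s m') else tOne.
Fixpoint tmul s m := if m is m'.+1 then tOplus s (tmul s m') else tZero.

Lemma evalL_tpow w s m : evalL n w s <= n ->
  evalL n w (tpow s m) = n - m * (n - evalL n w s).
Proof.
move=> H; elim: m => [|m IH] /=; first lia.
rewrite IH /odotL mulSn; set p := m * _; lia.
Qed.

Lemma evalL_tmul w s m : evalL n w (tmul s m) = minn n (m * evalL n w s).
Proof.
elim: m => [|m IH] /=; first lia.
rewrite IH /oplusL mulSn; set p := m * _; lia.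
Qed.

Lemma G_lemma mu : forall lo hi,
  (if hi == n then 0 else n - (hi - lo)) <= mu -> 1 <= lo <= hi -> hi <= n ->
  forall s, exists t, forall w, (forall i, w i <= n) ->
   (hi <= evalL n w s -> evalL n w t = n) /\ (evalL n w s < lo -> evalL n w t = 0).
Proof.
elim: mu => [|mu IH] lo hi Hm Hlh Hhn s.
- have Hh : hi = n by move: Hm; case: eqP => //; lia.
  exists (tpow s n) => w Hw; have Hs := evalL_le s Hw.
  rewrite evalL_tpow //; split => Hj.
  + have -> : n - evalL n w s = 0 by lia. by rewrite muln0 subn0.
  + have : n * 1 <= n * (n - evalL n w s) by rewrite leq_mul2l; apply/orP; right; lia.
    lia.
- case: (eqVneq hi n) => Hh.
  + exists (tpow s n) => w Hw; have Hs := evalL_le s Hw.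
    rewrite evalL_tpow //; split => Hj.
    * have -> : n - evalL n w s = 0 by lia. by rewrite muln0 subn0.
    * have : n * 1 <= n * (n - evalL n w s) by rewrite leq_mul2l; apply/orP; right; lia.
      lia.
  case: (eqVneq lo 1) => Hl.
  + exists (tmul s n) => w Hw; rewrite evalL_tmul; split => Hj.
    * have : n * 1 <= n * evalL n w s by rewrite leq_mul2l; apply/orP; right; lia.
      lia.
    * have -> : evalL n w s = 0 by lia. by rewrite muln0.
  have Hm' : n - (hi - lo) <= mu.+1 by move: Hm; rewrite (negbTE Hh).
  case: (leqP (2 * lo) n.+1) => Hc.
  + have [t Ht] := IH (2 * lo - 1) (minn n (2 * hi)) ltac:(case: eqP; lia) ltac:(lia) ltac:(lia) (tOplus s s).
    exists t => w Hw; have [H1 H2] := Ht w Hw; move: H1 H2 => /=; rewrite /oplusL => H1 H2.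
    split => Hj; [apply: H1 | apply: H2]; lia.
  + have [t Ht] := IH (2 * lo - 1 - n) (2 * hi - n) ltac:(case: eqP; lia) ltac:(lia) ltac:(lia) (tOdot s s).
    exists t => w Hw; have [H1 H2] := Ht w Hw; move: H1 H2 => /=; rewrite /odotL => H1 H2.
    have := evalL_le s Hw.
    split => Hj; [apply: H1 | apply: H2]; lia.
Qed.

Lemma thr_ex k : exists t, forall w, (forall i, w i <= n) ->
  evalL n w t = if k <= w 0 then n else 0.
Proof.
case: (posnP k) => [->|Hk]; first by exists tOne.
case: (leqP k n) => Hkn; last first.
  exists tZero => w Hw /=; have := Hw 0; case: (leqP k (w 0)) => //; lia.
have [t Ht] := @G_lemma n k k ltac:(case: eqP; lia) ltac:(lia) Hkn (tVar 0).
exists t => w Hw; have [H1 H2] := Ht w Hw; move: H1 H2 => /= H1 H2.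
case: leqP => Hc; [exact: H1 | exact: H2].
Qed.

Definition thr k := epsilon (inhabits tZero)
  (fun t => forall w, (forall i, w i <= n) -> evalL n w t = if k <= w 0 then n else 0).

Lemma thrP k w : (forall i, w i <= n) -> evalL n w (thr k) = if k <= w 0 then n else 0.
Proof. exact: (epsilon_spec (inhabits tZero) _ (thr_ex k)). Qed.

End Thr.


Section Ext.
Variable X : Type.
Variable Fin : list X -> list X -> Prop.
Hypothesis Fin_mono : forall P N P' N', (forall a, List.In a P' -> List.In a P) ->
  (forall a, List.In a N' -> List.In a N) -> Fin P N -> Fin P' N'.
Hypothesis Fin_split : forall P N a, Fin P N -> Fin (a :: P) N \/ Fin P (a :: N).
Hypothesis Fin0 : Fin nil nil.

Definition Good (P N : X -> Prop) := forall P0 N0, (forall a, List.In a P0 -> P a) ->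
  (forall a, List.In a N0 -> N a) -> Fin P0 N0.

Lemma Good_split P N a : Good P N ->
  Good (fun x => P x \/ x = a) N \/ Good P (fun x => N x \/ x = a).
Proof.
move=> G; apply: NNPP => Hn; move: (not_or_and _ _ Hn) => -[H1 H2].
apply: H1 => P1 N1 HP1 HN1; apply: NNPP => F1.
apply: H2 => P2 N2 HP2 HN2; apply: NNPP => F2.
pose P0 := List.filter (fun x => boolp.asbool (P x)) P1 ++ P2.
pose N0 := N1 ++ List.filter (fun x => boolp.asbool (N x)) N2.
have : Fin P0 N0.
  apply: G => x.
  - rewrite List.in_app_iff List.filter_In => -[[_ /boolp.asboolP //]|]; exact: HP2.
  - rewrite List.in_app_iff List.filter_In => -[|[_ /boolp.asboolP //]]; exact: HN1.
move/(Fin_split a) => [H|H].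
- apply: F1; apply: (Fin_mono _ _ H) => x Hx.
  + case: (HP1 x Hx) => [Px|->]; last by left.
    right; rewrite List.in_app_iff List.filter_In; left; split => //; exact/boolp.asboolP.
  + by rewrite List.in_app_iff; left.
- apply: F2; apply: (Fin_mono _ _ H) => x Hx.
  + by rewrite List.in_app_iff; right.
  + case: (HN2 x Hx) => [Nx|->]; last by left.
    right; rewrite List.in_app_iff List.filter_In; right; split => //; exact/boolp.asboolP.
Qed.

Lemma ext : exists y : X -> bool, forall P0 N0, (forall a, List.In a P0 -> y a) ->
  (forall a, List.In a N0 -> y a = false) -> Fin P0 N0.
Proof.
pose T := {pn : (X -> Prop) * (X -> Prop) | Good pn.1 pn.2}.
have G0 : Good (fun _ => False) (fun _ => False).
  by move=> [|x P0] [|y N0] HP HN //=; [case: (HN y) | case: (HP x) |case: (HP x)];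
     rewrite /=; auto.
pose t0 : T := exist _ (_, _) G0.
pose R (s t : T) := boolp.asbool ((forall a, (sval s).1 a -> (sval t).1 a) /\
                                  (forall a, (sval s).2 a -> (sval t).2 a)).
have [t tmax] : exists t, classical_sets.premaximal R t.
  apply: (classical_sets.ZL_preorder t0).
  - by move=> s; apply/boolp.asboolP.
  - move=> r s u /boolp.asboolP [H1 H2] /boolp.asboolP [H3 H4]; apply/boolp.asboolP; split; auto.
  - move=> A Atot.
    pose U := ((fun a => exists s, A s /\ (sval s).1 a), (fun a => exists s, A s /\ (sval s).2 a)).
    have key : forall (c : bool) (l : list X),
        (forall a, List.In a l -> exists s, A s /\ (if c then (sval s).1 a else (sval s).2 a)) ->
        l = nil \/ exists s, A s /\ forall a, List.In a l -> (if c then (sval s).1 a else (sval s).2 a).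
      move=> c; elim => [|x l IH] Hl; first by left.
      right; have [s [As Hs]] := Hl x (or_introl erefl).
      case: (IH (fun a Ha => Hl a (or_intror Ha))) => [->|[s' [As' Hs']]].
        by exists s; split => // a [<-|//].
      case: (Atot s s' As As') => /boolp.asboolP [H1 H2].
      + exists s'; split => // a [<-|Ha]; last exact: Hs'.
        by move: Hs; case: c {Hl IH Hs'} => /=; auto.
      + exists s; split => // a [<-|Ha] //; move: (Hs' a Ha); case: c {Hl IH Hs Hs'} => /=; auto.
    have GU : Good U.1 U.2.
      move=> P0 N0 HP HN.
      case: (key true P0 HP) => [->|[s1 [A1 H1]]];
      case: (key false N0 HN) => [->|[s2 [A2 H2]]] //.
      + by apply: (proj2_sig s2) => // a [].
      + by apply: (proj2_sig s1) => // a [].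
      + case: (Atot s1 s2 A1 A2) => /boolp.asboolP [H3 H4].
        * by apply: (proj2_sig s2) => a Ha; [apply: H3; apply: H1 | apply: H2].
        * by apply: (proj2_sig s1) => a Ha; [apply: H1 | apply: H4; apply: H2].
    exists (exist _ U GU) => s As; apply/boolp.asboolP; split => a Ha /=; exists s; auto.
case: t tmax => [[P N] G] tmax /=.
have tot : forall a, P a \/ N a.
  move=> a; case: (Good_split a G) => Ga.
  + have /boolp.asboolP [H _] := tmax (exist _ ((fun x => P x \/ x = a), N) Ga) (boolp.asboolT (conj (fun x Hx => or_introl Hx) (fun x Hx => Hx))).
    by left; apply: H; right.
  + have /boolp.asboolP [_ H] := tmax (exist _ (P, (fun x => N x \/ x = a)) Ga) (boolp.asboolT (conj (fun x Hx => Hx) (fun x Hx => or_introl Hx))).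
    by right; apply: H; right.
exists (fun a => boolp.asbool (P a)) => P0 N0 HP HN; apply: (G P0 N0) => a Ha.
- exact/boolp.asboolP/HP.
- case: (tot a) => // Pa; have := HN a Ha; by move/boolp.asboolP: Pa => ->.
Qed.
End Ext.

Section Compact.
Variable X : Type.
Variable D : (X -> bool) -> Prop.
Definition agreeP (P N : list X) (z : X -> bool) :=
  (forall a, List.In a P -> z a) /\ (forall a, List.In a N -> z a = false).
Hypothesis Dfin : forall y, ~ D y -> exists P N, agreeP P N y /\ forall z, agreeP P N z -> ~ D z.
Definition agree (y z : X -> bool) (s : list X) := forall a, List.In a s -> z a = y a.
Variable K : (X -> bool) -> Prop.
Hypothesis KD : forall y, K y -> D y.
Hypothesis Kcl : forall y, D y -> ~ K y -> exists s, forall z, D z -> agree y z s -> ~ K z.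
Variable I : Type.
Variable adm : I -> Prop.
Variable O : I -> (X -> bool) -> Prop.
Hypothesis Oopen : forall i y, adm i -> D y -> O i y -> exists s, forall z, D z -> agree y z s -> O i z.
Hypothesis cov : forall y, K y -> exists i, adm i /\ O i y.

Lemma agree_filter y z s : agreeP (List.filter y s) (List.filter (fun a => ~~ y a) s) z -> agree y z s.
Proof.
move=> [H1 H2] a Ha; case Ey: (y a).
- by apply: H1; apply/List.filter_In.
- by apply: H2; apply/List.filter_In; rewrite Ey.
Qed.

Lemma compact_cover : exists js : list I, (forall i, List.In i js -> adm i) /\
  forall y, K y -> exists i, List.In i js /\ O i y.
Proof.
apply: NNPP => Hno.
pose Fin P0 N0 := forall C0 : list I, (forall i, List.In i C0 -> adm i) ->
  exists z, K z /\ agreeP P0 N0 z /\ forall i, List.In i C0 -> ~ O i z.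
have [y Hy] : exists y : X -> bool, forall P0 N0, (forall a, List.In a P0 -> y a) ->
    (forall a, List.In a N0 -> y a = false) -> Fin P0 N0.
  apply: ext.
  - move=> P N P' N' HP HN F C0 HC; have [z [Kz [[Z1 Z2] Z3]]] := F C0 HC.
    by exists z; split => //; split => //; split; auto.
  - move=> P N a F; apply: NNPP => Hn; move: (not_or_and _ _ Hn) => -[H1 H2].
    apply: H1 => C1 HC1; apply: NNPP => F1; apply: H2 => C2 HC2; apply: NNPP => F2.
    have [z [Kz [[Z1 Z2] Z3]]] : exists z, K z /\ agreeP P N z /\ forall i, List.In i (C1 ++ C2) -> ~ O i z.
      by apply: F => i /List.in_app_iff [] ?; auto.
    case Ez: (z a).
    + apply: F1; exists z; split => //; split; first (split => // b [<-|]; auto).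
      by move=> i Hi; apply: Z3; apply/List.in_app_iff; auto.
    + apply: F2; exists z; split => //; split; first (split => // b [<-|]; auto).
      by move=> i Hi; apply: Z3; apply/List.in_app_iff; auto.
  - move=> C0 HC; apply: NNPP => Hn; apply: Hno; exists C0; split => // y Ky.
    apply: NNPP => Hn2; apply: Hn; exists y; split => //; split; first by split.
    by move=> i Hi Oi; apply: Hn2; exists i.
have Dy : D y.
  apply: NNPP => nD; have [P [N [Ay HD]]] := Dfin nD.
  have [z [Kz [Az _]]] := Hy P N (proj1 Ay) (proj2 Ay) nil (fun i (H : List.In i nil) => False_ind _ H).
  exact: (HD z Az (KD Kz)).
have Ky : K y.
  apply: NNPP => nK; have [s Hs] := Kcl Dy nK.
  have [z [Kz [Az _]]] := Hy (List.filter y s) (List.filter (fun a => ~~ y a) s)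
     (fun a Ha => proj2 (proj1 (List.filter_In _ _ _) Ha))
     (fun a Ha => negbTE (proj2 (proj1 (List.filter_In _ _ _) Ha))) nil (fun i (H : List.In i nil) => False_ind _ H).
  exact: (Hs z (KD Kz) (agree_filter Az)).
have [i [ai Oi]] := cov Ky.
have [s Hs] := Oopen ai Dy Oi.
have [z [Kz [Az Hz]]] := Hy (List.filter y s) (List.filter (fun a => ~~ y a) s)
     (fun a Ha => proj2 (proj1 (List.filter_In _ _ _) Ha))
     (fun a Ha => negbTE (proj2 (proj1 (List.filter_In _ _ _) Ha))) (i :: nil)
     (fun j Hj => match Hj with or_introl e => eq_ind i adm ai j e | or_intror H => False_ind _ H end).
exact: (Hz i (or_introl erefl) (Hs z (KD Kz) (agree_filter Az))).
Qed.
End Compact.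

Section PFT.
Variable X : Type.
Variables (mt jn : X -> X -> X) (bt tp : X).
Hypothesis mtC : forall x y, mt x y = mt y x.
Hypothesis jnC : forall x y, jn x y = jn y x.
Hypothesis mtA : forall x y z, mt x (mt y z) = mt (mt x y) z.
Hypothesis jnA : forall x y z, jn x (jn y z) = jn (jn x y) z.
Hypothesis mtK : forall x y, mt x (jn x y) = x.
Hypothesis jnK : forall x y, jn x (mt x y) = x.
Hypothesis distr : forall x y z, mt x (jn y z) = jn (mt x y) (mt x z).
Hypothesis mt1 : forall x, mt x tp = x.
Hypothesis jn0 : forall x, jn x bt = x.

Definition lle x y := mt x y = x.
Lemma mtxx x : mt x x = x.
Proof. by rewrite -{2}(jnK x x) mtK. Qed.
Lemma lle_refl x : lle x x. Proof. exact: mtxx. Qed.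
Lemma lle_trans x y z : lle x y -> lle y z -> lle x z.
Proof. by rewrite /lle => H1 H2; rewrite -H1 -mtA H2. Qed.
Lemma lle_mtl x y : lle (mt x y) x.
Proof. by rewrite /lle mtC mtA mtxx. Qed.
Lemma lle_mtr x y : lle (mt x y) y.
Proof. by rewrite /lle -mtA mtxx. Qed.
Lemma lle_glb z x y : lle z x -> lle z y -> lle z (mt x y).
Proof. by rewrite /lle => H1 H2; rewrite mtA H1 H2. Qed.
Lemma lle_jnl x y : lle x (jn x y). Proof. exact: mtK. Qed.
Lemma lle_jnr x y : lle y (jn x y). Proof. by rewrite jnC; exact: mtK. Qed.
Lemma lle_lub x y z : lle x z -> lle y z -> lle (jn x y) z.
Proof.
rewrite /lle => H1 H2; rewrite mtC distr (mtC z x) (mtC z y) H1 H2 //.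
Qed.
Lemma lle_antisym x y : lle x y -> lle y x -> x = y.
Proof. by rewrite /lle => H1 H2; rewrite -H1 -{2}H2 mtC. Qed.

Definition meetl := foldr mt tp.
Definition joinl := foldr jn bt.
Lemma meetl_le P x : List.In x P -> lle (meetl P) x.
Proof.
elim: P => [//|y P IH] /= [<-|H]; first exact: lle_mtl.
exact: lle_trans (lle_mtr _ _) (IH H).
Qed.
Lemma lle_meetl m P : (forall x, List.In x P -> lle m x) -> lle m (meetl P).
Proof.
elim: P => [|y P IH] H /=; first by rewrite /lle mt1.
apply: lle_glb; [by apply: H; left | by apply: IH => x Hx; apply: H; right].
Qed.
Lemma lle_joinl P x : List.In x P -> lle x (joinl P).
Proof.
elim: P => [//|y P IH] /= [<-|H]; first exact: lle_jnl.
exact: lle_trans (IH H) (lle_jnr _ _).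
Qed.
Lemma joinl_le m P : (forall x, List.In x P -> lle x m) -> lle (joinl P) m.
Proof.
elim: P => [|y P IH] H /=; first by rewrite /lle -(jn0 m) jnC mtK.
apply: lle_lub; [by apply: H; left | by apply: IH => x Hx; apply: H; right].
Qed.

Lemma lle_split p q c : lle (mt p c) q -> lle p (jn q c) -> lle p q.
Proof.
move=> H1 H2; have E : p = jn (mt p q) (mt p c) by rewrite -distr.
rewrite E; apply: lle_lub => //; exact: lle_mtr.
Qed.

Lemma pft a b : ~ lle a b -> exists y : X -> bool, [/\ y a, y b = false,
  forall u v, y (mt u v) = y u && y v, forall u v, y (jn u v) = y u || y v &
  y bt = false /\ y tp = true].
Proof.
move=> nab.
pose Fin P N := ~ lle (mt a (meetl P)) (jn b (joinl N)).
have Fcon : forall P N, lle (meetl P) (joinl N) -> ~ Fin P N.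
  move=> P N H; apply; apply: lle_trans (lle_mtr _ _) _; apply: lle_trans H (lle_jnr _ _).
have [y Hy] : exists y : X -> bool, forall P0 N0, (forall x, List.In x P0 -> y x) ->
    (forall x, List.In x N0 -> y x = false) -> Fin P0 N0.
  apply: ext.
  - move=> P N P' N' HP HN F H; apply: F; apply: lle_trans _ (lle_trans H _).
    + apply: lle_glb; first exact: lle_mtl.
      apply: lle_trans (lle_mtr _ _) _; apply: lle_meetl => x Hx; exact: meetl_le (HP _ Hx).
    + apply: lle_lub; first exact: lle_jnl.
      apply: lle_trans _ (lle_jnr _ _); apply: joinl_le => x Hx; exact: lle_joinl (HN _ Hx).
  - move=> P N c F; apply: NNPP => Hn; move: (not_or_and _ _ Hn) => -[H1 H2].
    apply: F; apply: (@lle_split _ _ c).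
    + apply: NNPP => H; apply: H1 => H'; apply: H.
      by rewrite -mtA (mtC (meetl P) c); exact: H'.
    + apply: NNPP => H; apply: H2 => H'; apply: H.
      by rewrite -jnA (jnC (joinl N) c); exact: H'.
  - by rewrite /Fin /= mt1 jn0.
have nil0 : forall x, List.In x nil -> y x = false by [].
have nil1 : forall x, List.In x nil -> y x by [].
have one : forall u, y u -> forall x, List.In x (u :: nil) -> y x by move=> u ? x [<-|].
have zero : forall u, y u = false -> forall x, List.In x (u :: nil) -> y x = false by move=> u ? x [<-|].
have two : forall u v, y u -> y v -> forall x, List.In x (u :: v :: nil) -> y x by move=> u v ? ? x [<-|[<-|]].
have twoz : forall u v, y u = false -> y v = false -> forall x, List.In x (u :: v :: nil) -> y x = false by move=> u v ? ? x [<-|[<-|]].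
exists y; split.
- case Ea: (y a) => //; exfalso.
  apply: (Hy nil (a :: nil) nil1 (zero _ Ea)); rewrite /= mt1.
  apply: lle_trans (lle_jnr _ _); exact: lle_jnl.
- case Eb: (y b) => //; exfalso.
  apply: (Hy (b :: nil) nil (one _ Eb) nil0); rewrite /= mt1 jn0.
  exact: lle_mtr.
- move=> u v; case Euv: (y (mt u v)); case Eu: (y u); case Ev: (y v) => //=; exfalso.
  + apply: (Fcon _ _ _ (Hy _ _ (one _ Euv) (zero _ Ev))); rewrite /= mt1 jn0; exact: lle_mtr.
  + apply: (Fcon _ _ _ (Hy _ _ (one _ Euv) (zero _ Eu))); rewrite /= mt1 jn0; exact: lle_mtl.
  + apply: (Fcon _ _ _ (Hy _ _ (one _ Euv) (zero _ Eu))); rewrite /= mt1 jn0; exact: lle_mtl.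
  + apply: (Fcon _ _ _ (Hy _ _ (two _ _ Eu Ev) (zero _ Euv))); rewrite /= mt1 jn0; exact: lle_refl.
- move=> u v; case Euv: (y (jn u v)); case Eu: (y u); case Ev: (y v) => //=; exfalso.
  + apply: (Fcon _ _ _ (Hy _ _ (one _ Euv) (twoz _ _ Eu Ev))); rewrite /= mt1 jn0; exact: lle_refl.
  + apply: (Fcon _ _ _ (Hy _ _ (one _ Ev) (zero _ Euv))); rewrite /= mt1 jn0; exact: lle_jnr.
  + apply: (Fcon _ _ _ (Hy _ _ (one _ Eu) (zero _ Euv))); rewrite /= mt1 jn0; exact: lle_jnl.
  + apply: (Fcon _ _ _ (Hy _ _ (one _ Ev) (zero _ Euv))); rewrite /= mt1 jn0; exact: lle_jnr.
- split.
 case E: (y bt) => //; exfalso.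
  apply: (Fcon _ _ _ (Hy _ _ (one _ E) nil0)); rewrite /= mt1; exact: lle_refl.
- case E: (y tp) => //; exfalso.
  apply: (Fcon _ _ _ (Hy _ _ nil1 (zero _ E))); rewrite /= jn0; exact: lle_refl.
Qed.
End PFT.

Section LatWrap.
Import Order.TTheory.


Section Lat.
Variables (d : Order.disp_t) (L : tbDistrLatticeType d).
Local Open Scope order_scope.

Lemma sep_L (l l' : L) : (forall y, lat_dual y -> y l = y l') -> l = l'.
Proof.
move=> H; apply: NNPP => Hne.
have key : forall a b : L, ~ (a `&` b = a) -> exists y, lat_dual y /\ y a /\ y b = false.
  move=> a b Hab.
  have [y [Ya Yb Ym Yj [Y0 Y1]]] := @pft L Order.meet Order.join \bot \top meetC joinC meetA joinA
    (fun x y => joinKI y x) (fun x y => meetKU y x) meetUr meetx1 joinx0 a b Hab.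
  by exists y; split => //; split.
case: (classic (l `&` l' = l)) => H1; case: (classic (l' `&` l = l')) => H2.
- by apply: Hne; rewrite -H1 -{2}H2 meetC.
- by have [y [Dy [Y1 Y2]]] := key _ _ H2; have := H y Dy; rewrite Y1 Y2.
- by have [y [Dy [Y1 Y2]]] := key _ _ H1; have := H y Dy; rewrite Y1 Y2.
- by have [y [Dy [Y1 Y2]]] := key _ _ H1; have := H y Dy; rewrite Y1 Y2.
Qed.

Lemma lat_dual_fin (y : L -> bool) : (forall s, exists z, lat_dual z /\ agree y z s) -> lat_dual y.
Proof.
move=> H; split.
- move=> a b; have [z [[Zm _ _ _] Ag]] := H [:: a `&` b; a; b].
  rewrite -(Ag (a `&` b) (or_introl erefl)) -(Ag a (or_intror (or_introl erefl))).
  by rewrite -(Ag b (or_intror (or_intror (or_introl erefl)))) Zm.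
- move=> a b; have [z [[_ Zj _ _] Ag]] := H [:: a `|` b; a; b].
  rewrite -(Ag (a `|` b) (or_introl erefl)) -(Ag a (or_intror (or_introl erefl))).
  by rewrite -(Ag b (or_intror (or_intror (or_introl erefl)))) Zj.
- have [z [[_ _ Z0 _] Ag]] := H [:: \bot]; by rewrite -(Ag \bot (or_introl erefl)).
- have [z [[_ _ _ Z1] Ag]] := H [:: \top]; by rewrite -(Ag \top (or_introl erefl)).
Qed.

Lemma lat_Dfin (y : L -> bool) : ~ lat_dual y -> exists P N, agreeP P N y /\
  forall z, agreeP P N z -> ~ lat_dual z.
Proof.
move=> nD; apply: NNPP => Hn; apply: nD; apply: lat_dual_fin => s.
apply: NNPP => Hn2; apply: Hn; exists (List.filter y s), (List.filter (fun a => ~~ y a) s).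
split.
  split => a /List.filter_In [_ //]; by move/negbTE.
move=> z Az Dz; apply: Hn2; exists z; split => //; exact: agree_filter.
Qed.

Lemma dual_meetl (z : L -> bool) js : lat_dual z ->
  (z (foldr Order.meet \top js) <-> forall m, List.In m js -> z m).
Proof.
case=> Zm _ _ Z1; elim: js => [|m js IH] /=; first by rewrite Z1.
rewrite Zm; split => [/andP [H1 /IH H2] m' [<-|]|H] //; auto.
apply/andP; split; [apply: H; left | apply/IH => m' Hm'; apply: H; right] => //.
Qed.

Lemma dual_joinl (z : L -> bool) js : lat_dual z ->
  (z (foldr Order.join \bot js) <-> exists m, List.In m js /\ z m).
Proof.
case=> _ Zj Z0 _; elim: js => [|m js IH] /=; first by rewrite Z0; split => // -[m []].
rewrite Zj; split => [/orP [H|/IH [m' [H1 H2]]]|[m' [[<-|H1] H2]]].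
- by exists m; split => //; left.
- by exists m'; split => //; right.
- by rewrite H2.
- by apply/orP; right; apply/IH; exists m'.
Qed.

Variable n : nat.

Lemma rep (phi : (L -> bool) -> nat) : in_PP n (@lat_dual d L) phi ->
  exists l, forall y, lat_dual y -> (y l <-> phi y = n).
Proof.
move=> [Hle Hmono Hloc].
have Oop : forall b (m : L) (z : L -> bool), True -> lat_dual z -> z m = b ->
    exists s, forall z', lat_dual z' -> agree z z' s -> z' m = b.
  move=> b m z _ Dz Hz; exists (m :: nil) => z' _ Ag; rewrite (Ag m (or_introl erefl)) //.
have step1 : forall y, lat_dual y -> phi y = n ->
    exists l, y l /\ forall z, lat_dual z -> z l -> phi z = n.
  move=> y Dy Py.
  have Kcl : forall z, lat_dual z -> ~ (lat_dual z /\ phi z <> n) ->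
      exists s, forall z', lat_dual z' -> agree z z' s -> ~ (lat_dual z' /\ phi z' <> n).
    move=> z Dz nK; have [s Hs] := Hloc z Dz; exists s => z' Dz' Ag [_ H]; apply: H.
    rewrite (Hs z' Dz' Ag); apply: NNPP => H'; exact: nK (conj Dz H').
  have Ocov : forall z, lat_dual z /\ phi z <> n -> exists m, y m /\ z m = false.
    move=> z [Dz nP]; apply: NNPP => Hn.
    apply: nP; have := Hle z Dz; have := Hmono y z Dy Dz; rewrite Py => H1 H2.
    suff : n <= phi z by lia.
    apply: H1 => a; apply: NNPP => Ha; apply: Hn; exists a.
    by move: Ha; case: (y a); case: (z a).
  have [js [Hadm Hcov]] := @compact_cover L (@lat_dual d L) (@lat_Dfin)
    (fun z => lat_dual z /\ phi z <> n) (fun z (H : _ /\ _) => proj1 H) Kcl L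
    (fun m => y m) (fun m z => z m = false) (fun m z H => Oop false m z I) Ocov.
  exists (foldr Order.meet \top js); split.
  + by apply/(dual_meetl _ Dy) => m /Hadm.
  + move=> z Dz /(dual_meetl _ Dz) Hz; apply: NNPP => nP.
    have [i [Hi Oi]] := Hcov z (conj Dz nP).
    by rewrite Hz in Oi.
have Kcl : forall z, lat_dual z -> ~ (lat_dual z /\ phi z = n) ->
    exists s, forall z', lat_dual z' -> agree z z' s -> ~ (lat_dual z' /\ phi z' = n).
  move=> z Dz nK; have [s Hs] := Hloc z Dz; exists s => z' Dz' Ag [_ H]; apply: nK.
  by split => //; rewrite -(Hs z' Dz' Ag).
have Ocov : forall z, lat_dual z /\ phi z = n ->
    exists l, (forall z, lat_dual z -> z l -> phi z = n) /\ z l = true.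
  move=> z [Dz Pz]; have [l [H1 H2]] := step1 z Dz Pz; by exists l.
have [js [Hadm Hcov]] := @compact_cover L (@lat_dual d L) (@lat_Dfin)
    (fun z => lat_dual z /\ phi z = n) (fun z (H : _ /\ _) => proj1 H) Kcl L
    (fun l => forall z, lat_dual z -> z l -> phi z = n) (fun l z => z l = true)
    (fun m z H => Oop true m z I) Ocov.
exists (foldr Order.join \bot js) => y Dy; rewrite (dual_joinl _ Dy); split.
- by move=> [m [Hm Ym]]; exact: (Hadm m Hm y Dy Ym).
- by move=> Py; have [i [Hi Oi]] := Hcov y (conj Dy Py); exists i.
Qed.

End Lat.

End LatWrap.

Fixpoint tsubst (s : nat -> term) t := match t with
 | tVar i => s i | tZero => tZero | tOne => tOne
 | tMeet a b => tMeet (tsubst s a) (tsubst s b)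
 | tJoin a b => tJoin (tsubst s a) (tsubst s b)
 | tOdot a b => tOdot (tsubst s a) (tsubst s b)
 | tOplus a b => tOplus (tsubst s a) (tsubst s b) end.

Lemma eval_subst (B : pmvAlg) (v : nat -> B) s t :
  eval v (tsubst s t) = eval (fun i => eval v (s i)) t.
Proof. by elim: t => //= *; congr (_ _ _). Qed.

Lemma evalL_subst m v s t : evalL m v (tsubst s t) = evalL m (fun i => evalL m v (s i)) t.
Proof. by elim: t => //= *; congr (_ _ _). Qed.

Lemma In_mem (T : eqType) (x : T) s : x \in s -> List.In x s.
Proof. elim: s => //= y s IH; rewrite inE => /orP [/eqP ->|/IH]; auto. Qed.

Lemma count_thr N c (q : pred nat) : c <= N -> (forall k, 1 <= k <= N -> q k = (k <= c)) ->
  count q (iota 1 N) = c.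
Proof.
move=> Hc Hq; rewrite (@eq_in_count _ _ (fun k => k <= c)); last first.
  by move=> k; rewrite mem_iota => Hk; apply: Hq; lia.
elim: N Hc {Hq} => [|N IH] Hc; first by rewrite /=; lia.
rewrite -[N.+1]addn1 iotaD count_cat /=.
case: (leqP c N) => HcN.
- rewrite IH //; case: (leqP (1 + N) c) => //= H; lia.
- have -> : c = N.+1 by lia.
  have -> : count (fun k => k <= N.+1) (iota 1 N) = N.
    rewrite (@eq_in_count _ _ predT) ?count_predT ?size_iota //.
    by move=> k; rewrite mem_iota => Hk; rewrite /= ; lia.
  by case: (leqP (1 + N) c) => //= H; lia.
Qed.

Lemma chain_count N (p : pred nat) : (forall i k, 1 <= i <= k -> k <= N -> p k -> p i) ->
  forall k, 1 <= k <= N -> p k = (k <= count p (iota 1 N)).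
Proof.
elim: N => [|N IH] Hch k Hk; first lia.
rewrite -[N.+1]addn1 iotaD count_cat /= addn0 add1n.
have Hc : count p (iota 1 N) <= N by rewrite -[X in _ <= X](size_iota 1 N) count_size.
have IH' := IH (fun i k Hik HkN => Hch i k Hik (leqW HkN)).
case E: (p N.+1).
- have allp : forall j, 1 <= j <= N.+1 -> p j by move=> j Hj; apply: (Hch j N.+1) => //; lia.
  case: (posnP N) => HN.
  + subst N; rewrite /= allp; last lia. by apply/esym/idP; lia.
  + have := IH' N ltac:(lia); rewrite allp; last lia.
    move=> H; have HcN : count p (iota 1 N) = N by apply/eqP; rewrite eqn_leq Hc -H.
    rewrite HcN allp; last lia. by apply/esym/idP; lia.
- case: (eqVneq k N.+1) => [->|Hne]; first by rewrite E; symmetry; apply/negbTE; rewrite -ltnNge; lia.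
  rewrite IH' ?addn0 //; lia.
Qed.

Section Alg.
Variable n : nat.
Hypothesis hn : 0 < n.
Variable A : pmvAlg.
Hypothesis HA : in_PMV n A.

Definition B k s := tsubst (fun _ => s) (thr n k).
Definition T k (a : A) := eval (fun _ => a) (thr n k).

Lemma evalL_B w k s : (forall i, w i <= n) ->
  evalL n w (B k s) = if k <= evalL n w s then n else 0.
Proof.
move=> Hw; rewrite /B evalL_subst thrP // => i; exact: evalL_le.
Qed.

Lemma eval_B v k s : eval v (B k s) = T k (eval v s).
Proof. by rewrite /B eval_subst. Qed.

Lemma PLid s t (v : nat -> A) : PL_identity n s t -> eval v s = eval v t.
Proof. move=> H; exact: HA. Qed.

Definition v2 (a b : A) := fun i : nat => if i is 0 then a else b.

Ltac plid := let w := fresh "w" in let Hw := fresh "Hw" in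
  move=> w Hw; rewrite /= ?evalL_B //= ?thrP //=; have := Hw 0; have := Hw 1;
  rewrite /odotL /oplusL; repeat case: ifP; lia.

Definition idem (a : A) := poplus a a = a.

Lemma idem_T k a : idem (T k a).
Proof. apply: (@PLid (tOplus (thr n k) (thr n k)) (thr n k) (fun _ => a)); plid. Qed.

Lemma skel_eq (s t : skel A) : sval s = sval t -> s = t.
Proof. case: s t => [a Ha] [b Hb] /= E; subst b; f_equal; exact: proof_irrelevance. Qed.

Definition Tk k a : skel A := exist _ (T k a) (idem_T k a).
Definition eta (a : A) (x : skel A -> bool) := count (fun k => x (Tk k a)) (iota 1 n).

Definition xb (x : skel A -> bool) a := exists s : skel A, sval s = a /\ x s.
Lemma xbE x (s : skel A) : xb x (sval s) <-> x s.
Proof. by split => [[t [/skel_eq -> //]]|H]; exists s. Qed.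

Section Dual.
Variable x : skel A -> bool.
Hypothesis Hx : skel_dual x.

Lemma xb_le a b : idem a -> idem b -> pmeet a b = a -> xb x a -> xb x b.
Proof.
move=> Ha Hb E; case: Hx => Hm _ _ _.
have -> : a = sval (exist _ a Ha : skel A) by [].
move/xbE; rewrite (Hm (exist _ a Ha) (exist _ b Hb) (exist _ a Ha)) ?E //.
by move/andP => [_ H]; apply/(xbE x (exist _ b Hb)).
Qed.

Lemma xb_meet a b : idem a -> idem b -> idem (pmeet a b) -> (xb x (pmeet a b) <-> xb x a /\ xb x b).
Proof.
move=> Ha Hb Hab; case: Hx => Hm _ _ _.
have -> : pmeet a b = sval (exist _ _ Hab : skel A) by [].
rewrite xbE (Hm (exist _ a Ha) (exist _ b Hb)) //.
rewrite -[a]/(sval (exist _ a Ha : skel A)) -[b]/(sval (exist _ b Hb : skel A)) !xbE.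
by split => [/andP|[-> ->]].
Qed.

Lemma xb_join a b : idem a -> idem b -> idem (pjoin a b) -> (xb x (pjoin a b) <-> xb x a \/ xb x b).
Proof.
move=> Ha Hb Hab; case: Hx => _ Hj _ _.
have -> : pjoin a b = sval (exist _ _ Hab : skel A) by [].
rewrite xbE (Hj (exist _ a Ha) (exist _ b Hb)) //.
rewrite -[a]/(sval (exist _ a Ha : skel A)) -[b]/(sval (exist _ b Hb : skel A)) !xbE.
by split => [/orP|[->|->]] //; rewrite orbT.
Qed.

Lemma xb_zero : ~ xb x (pzero A).
Proof. case: Hx => _ _ Hz _ [s [E H]]; by rewrite Hz in H. Qed.

Lemma idem_one : idem (pone A).
Proof. apply: (@PLid (tOplus tOne tOne) tOne (fun _ => pone A)); plid. Qed.

Lemma xb_one : xb x (pone A).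
Proof. case: Hx => _ _ _ Ho; exists (exist _ _ idem_one); split => //; exact: Ho. Qed.

End Dual.

Local Unset Implicit Arguments.

Ltac idE s t v E := have E : eval v s = eval v t;
  [by apply: PLid; plid | rewrite /= ?eval_B /= in E].

Notation x0 := (tVar 0).
Notation x1 := (tVar 1).
Notation vv a b := (fun i : nat => if i is 0 then a else b).

Lemma T0 a : T 0 a = pone A.
Proof. by idE (B 0 x0) tOne (fun _ : nat => a) E. Qed.
Lemma Tbig k a : n < k -> T k a = pzero A.
Proof. by move=> Hk; idE (B k x0) tZero (fun _ : nat => a) E. Qed.
Lemma Tchain i k a : i <= k -> pmeet (T k a) (T i a) = T k a.
Proof. by move=> Hk; idE (tMeet (B k x0) (B i x0)) (B k x0) (fun _ : nat => a) E. Qed.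
Lemma T_meet k a b : T k (pmeet a b) = pmeet (T k a) (T k b).
Proof. by idE (B k (tMeet x0 x1)) (tMeet (B k x0) (B k x1)) (vv a b) E. Qed.
Lemma T_join k a b : T k (pjoin a b) = pjoin (T k a) (T k b).
Proof. by idE (B k (tJoin x0 x1)) (tJoin (B k x0) (B k x1)) (vv a b) E. Qed.
Lemma T_zero k : 0 < k -> T k (pzero A) = pzero A.
Proof. by move=> Hk; idE (B k tZero) tZero (fun _ : nat => pzero A) E. Qed.
Lemma T_one k : k <= n -> T k (pone A) = pone A.
Proof. by move=> Hk; idE (B k tOne) tOne (fun _ : nat => pone A) E. Qed.
Lemma R3 i j k a b : 0 < k -> i + j = n + k + 1 ->
  pmeet (T k (podot a b)) (pjoin (T i a) (T j b)) = T k (podot a b).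
Proof. by move=> H0 H; idE (tMeet (B k (tOdot x0 x1)) (tJoin (B i x0) (B j x1))) (B k (tOdot x0 x1)) (vv a b) E. Qed.
Lemma R4 i j k a b : i + j = n + k ->
  pmeet (pmeet (T i a) (T j b)) (T k (podot a b)) = pmeet (T i a) (T j b).
Proof. by move=> H; idE (tMeet (tMeet (B i x0) (B j x1)) (B k (tOdot x0 x1))) (tMeet (B i x0) (B j x1)) (vv a b) E. Qed.
Lemma R7 i j k a b : i + j = k -> k <= n ->
  pmeet (pmeet (T i a) (T j b)) (T k (poplus a b)) = pmeet (T i a) (T j b).
Proof. by move=> H H'; idE (tMeet (tMeet (B i x0) (B j x1)) (B k (tOplus x0 x1))) (tMeet (B i x0) (B j x1)) (vv a b) E. Qed.
Lemma R8 i j k a b : i + j = k + 1 ->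
  pmeet (T k (poplus a b)) (pjoin (T i a) (T j b)) = T k (poplus a b).
Proof. by move=> H; idE (tMeet (B k (tOplus x0 x1)) (tJoin (B i x0) (B j x1))) (B k (tOplus x0 x1)) (vv a b) E. Qed.
Lemma idem_meetT i j a b : idem (pmeet (T i a) (T j b)).
Proof. by idE (tOplus (tMeet (B i x0) (B j x1)) (tMeet (B i x0) (B j x1))) (tMeet (B i x0) (B j x1)) (vv a b) E. Qed.
Lemma idem_joinT i j a b : idem (pjoin (T i a) (T j b)).
Proof. by idE (tOplus (tJoin (B i x0) (B j x1)) (tJoin (B i x0) (B j x1))) (tJoin (B i x0) (B j x1)) (vv a b) E. Qed.

Lemma eta_le c x : eta c x <= n.
Proof. by rewrite /eta -[X in _ <= X](size_iota 1 n) count_size. Qed.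

Section Dual2.
Variable x : skel A -> bool.
Hypothesis Hx : skel_dual x.

Lemma bitP c k : xb x (T k c) <-> k <= eta c x.
Proof.
case: (posnP k) => [->|Hk].
  by rewrite T0; split => // _; exact: (xb_one Hx).
case: (leqP k n) => Hkn; last first.
  rewrite Tbig //; split => [/(xb_zero Hx) //|]; have := eta_le c x; lia.
have Hch : forall i k, 1 <= i <= k -> k <= n -> x (Tk k c) -> x (Tk i c).
  move=> i j Hij Hj H; apply: (proj1 (xbE x (Tk i c))).
  exact: (xb_le Hx (idem_T _ _) (idem_T _ _) (Tchain i j c ltac:(lia))) (proj2 (xbE x (Tk j c)) H).
have := chain_count Hch (k := k) ltac:(lia); rewrite -/(eta c x) => E.
by rewrite -E; exact: (xbE x (Tk k c)).
Qed.

Lemma bitB c k (b : bool) : (xb x (T k c) <-> b) -> x (Tk k c) = b.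
Proof.
move=> H; apply/idP/idP => H1; first by apply/H; apply: (proj2 (xbE x (Tk k c))).
by apply: (proj1 (xbE x (Tk k c))); apply/H.
Qed.

Lemma eta_meet a b : eta (pmeet a b) x = minn (eta a x) (eta b x).
Proof.
apply: count_thr; first by have := eta_le a x; lia.
move=> k Hk; apply: bitB; rewrite T_meet; split.
- move/(xb_meet Hx (idem_T _ _) (idem_T _ _) (idem_meetT _ _ _ _)) => [/bitP H1 /bitP H2]; lia.
- move=> H; apply/(xb_meet Hx (idem_T _ _) (idem_T _ _) (idem_meetT _ _ _ _)); split; apply/bitP; lia.
Qed.

Lemma eta_join a b : eta (pjoin a b) x = maxn (eta a x) (eta b x).
Proof.
apply: count_thr; first by have := eta_le a x; have := eta_le b x; lia.
move=> k Hk; apply: bitB; rewrite T_join; split.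
- move/(xb_join Hx (idem_T _ _) (idem_T _ _) (idem_joinT _ _ _ _)) => [/bitP H1|/bitP H2]; lia.
- move=> H; apply/(xb_join Hx (idem_T _ _) (idem_T _ _) (idem_joinT _ _ _ _)).
  case: (leqP k (eta a x)) => H1; [left|right]; apply/bitP; lia.
Qed.

Lemma eta_odot a b : eta (podot a b) x = odotL n (eta a x) (eta b x).
Proof.
have Ha := eta_le a x; have Hb := eta_le b x.
apply: count_thr; first by rewrite /odotL; lia.
move=> k Hk; apply: bitB; rewrite /odotL; split.
- move=> H.
  have := xb_le Hx (idem_T _ _) (idem_joinT (eta a x).+1 (n + k - eta a x) a b)
    (R3 (eta a x).+1 (n + k - eta a x) k a b ltac:(lia) ltac:(lia)) H.
  move/(xb_join Hx (idem_T _ _) (idem_T _ _) (idem_joinT _ _ _ _)) => [/bitP|/bitP]; lia.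
- move=> H; apply: (xb_le Hx (idem_meetT (eta a x) (n + k - eta a x) a b) (idem_T _ _)
    (R4 (eta a x) (n + k - eta a x) k a b ltac:(lia))).
  apply/(xb_meet Hx (idem_T _ _) (idem_T _ _) (idem_meetT _ _ _ _)); split; apply/bitP; lia.
Qed.

Lemma eta_oplus a b : eta (poplus a b) x = oplusL n (eta a x) (eta b x).
Proof.
have Ha := eta_le a x; have Hb := eta_le b x.
apply: count_thr; first by rewrite /oplusL; lia.
move=> k Hk; apply: bitB; rewrite /oplusL; split.
- move=> H; apply: NNPP => Hn.
  have := xb_le Hx (idem_T _ _) (idem_joinT (eta a x).+1 (k - eta a x) a b)
    (R8 (eta a x).+1 (k - eta a x) k a b ltac:(lia)) H.
  move/(xb_join Hx (idem_T _ _) (idem_T _ _) (idem_joinT _ _ _ _)) => [/bitP|/bitP]; lia.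
- move=> H; apply: (xb_le Hx (idem_meetT (minn (eta a x) k) (k - minn (eta a x) k) a b) (idem_T _ _)
    (R7 (minn (eta a x) k) (k - minn (eta a x) k) k a b ltac:(lia) ltac:(lia))).
  apply/(xb_meet Hx (idem_T _ _) (idem_T _ _) (idem_meetT _ _ _ _)); split; apply/bitP; lia.
Qed.

Lemma eta_zero : eta (pzero A) x = 0.
Proof.
apply: count_thr => // k Hk; apply: bitB; rewrite T_zero; last lia.
split => [/(xb_zero Hx) //|]; lia.
Qed.

Lemma eta_one : eta (pone A) x = n.
Proof.
apply: count_thr => // k Hk; apply: bitB; rewrite T_one; last lia.
split => _; [lia | exact: (xb_one Hx)].
Qed.

End Dual2.

Lemma In_iota k : 1 <= k <= n -> List.In k (iota 1 n).
Proof. move=> Hk; apply: In_mem; rewrite mem_iota; lia. Qed.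

Lemma eta_inPP a : in_PP n (@skel_dual A) (eta a).
Proof.
split.
- move=> x _; exact: eta_le.
- move=> x y _ _ Hxy; rewrite /eta; apply: sub_count => k; exact: (implyP (Hxy _)).
- move=> x _; exists (List.map (fun k => Tk k a) (iota 1 n)) => y _ Ag.
  rewrite /eta; apply: eq_in_count => k; rewrite mem_iota => Hk; apply: Ag.
  apply: (List.in_map (fun k => Tk k a)); apply: In_iota; lia.
Qed.

Lemma eta_hom : PP_hom n (@skel_dual A) eta.
Proof.
split; first exact: eta_inPP.
move=> x Hx; split; first split.
- exact: (eta_meet x Hx).
- exact: (eta_join x Hx).
- exact: (eta_odot x Hx).
- exact: (eta_oplus x Hx).
- split; [exact: (eta_zero x Hx) | exact: (eta_one x Hx)].
Qed.

Notation vv3 a b c := (fun i : nat => match i with 0 => a | 1 => b | _ => c end).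

Lemma idem_pmeet a b : idem a -> idem b -> idem (pmeet a b).
Proof.
move=> Ha Hb; idE (tOplus (tMeet x0 x1) (tMeet x0 x1)) (tMeet (tOplus x0 x0) (tOplus x1 x1)) (vv a b) E.
by rewrite /idem E Ha Hb.
Qed.
Lemma idem_pjoin a b : idem a -> idem b -> idem (pjoin a b).
Proof.
move=> Ha Hb; idE (tOplus (tJoin x0 x1) (tJoin x0 x1)) (tJoin (tOplus x0 x0) (tOplus x1 x1)) (vv a b) E.
by rewrite /idem E Ha Hb.
Qed.
Lemma idem_zero : idem (pzero A).
Proof. by idE (tOplus tZero tZero) tZero (fun _ : nat => pzero A) E. Qed.

Definition mts (s t : skel A) : skel A := exist _ _ (idem_pmeet _ _ (proj2_sig s) (proj2_sig t)).
Definition jns (s t : skel A) : skel A := exist _ _ (idem_pjoin _ _ (proj2_sig s) (proj2_sig t)).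
Definition bts : skel A := exist _ _ idem_zero.
Definition tps : skel A := exist _ _ idem_one.

Lemma sep_skel (s t : skel A) : (forall x, skel_dual x -> x s = x t) -> s = t.
Proof.
move=> H; apply: NNPP => Hne.
have key : forall a b : skel A, ~ (mts a b = a) -> exists y, skel_dual y /\ y a /\ y b = false.
  move=> a b Hab.
  have [y [Ya Yb Ym Yj [Y0 Y1]]] := @pft (skel A) mts jns bts tps
    ltac:(move=> [p ?] [q ?]; apply: skel_eq => /=; by idE (tMeet x0 x1) (tMeet x1 x0) (vv p q) E)
    ltac:(move=> [p ?] [q ?]; apply: skel_eq => /=; by idE (tJoin x0 x1) (tJoin x1 x0) (vv p q) E)
    ltac:(move=> [p ?] [q ?] [r ?]; apply: skel_eq => /=;
          by idE (tMeet x0 (tMeet x1 (tVar 2))) (tMeet (tMeet x0 x1) (tVar 2)) (vv3 p q r) E)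
    ltac:(move=> [p ?] [q ?] [r ?]; apply: skel_eq => /=;
          by idE (tJoin x0 (tJoin x1 (tVar 2))) (tJoin (tJoin x0 x1) (tVar 2)) (vv3 p q r) E)
    ltac:(move=> [p ?] [q ?]; apply: skel_eq => /=; by idE (tMeet x0 (tJoin x0 x1)) (tVar 0) (vv p q) E)
    ltac:(move=> [p ?] [q ?]; apply: skel_eq => /=; by idE (tJoin x0 (tMeet x0 x1)) (tVar 0) (vv p q) E)
    ltac:(move=> [p ?] [q ?] [r ?]; apply: skel_eq => /=;
          by idE (tMeet x0 (tJoin x1 (tVar 2))) (tJoin (tMeet x0 x1) (tMeet x0 (tVar 2))) (vv3 p q r) E)
    ltac:(move=> [p ?]; apply: skel_eq => /=; by idE (tMeet x0 tOne) (tVar 0) (fun _ : nat => p) E)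
    ltac:(move=> [p ?]; apply: skel_eq => /=; by idE (tJoin x0 tZero) (tVar 0) (fun _ : nat => p) E)
    a b Hab.
  exists y; split => //; split.
  - move=> u v w E; rewrite -Ym; congr y; exact: skel_eq.
  - move=> u v w E; rewrite -Yj; congr y; exact: skel_eq.
  - by move=> u E; rewrite -Y0; congr y; exact: skel_eq.
  - by move=> u E; rewrite -Y1; congr y; exact: skel_eq.
case: (classic (mts s t = s)) => H1; case: (classic (mts t s = t)) => H2.
- apply: Hne; rewrite -H1 -{2}H2; apply: skel_eq => /=.
  by case: s t {H H1 H2} => [p ?] [q ?] /=; idE (tMeet x0 x1) (tMeet x1 x0) (vv p q) E.
- by have [y [Dy [Y1 Y2]]] := key _ _ H2; have := H y Dy; rewrite Y1 Y2.
- by have [y [Dy [Y1 Y2]]] := key _ _ H1; have := H y Dy; rewrite Y1 Y2.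
- by have [y [Dy [Y1 Y2]]] := key _ _ H1; have := H y Dy; rewrite Y1 Y2.
Qed.

Lemma chainH a b : (forall k, T k a = T k b) -> pmeet a b = a.
Proof.
move=> HT.
have H : forall m, a = pmeet a (pjoin b (T m.+1 b)).
  elim => [|m IH].
  - idE (tVar 0) (tMeet x0 (tJoin x1 (B 1 x0))) (vv a b) E.
    by rewrite {1}E HT.
  - idE (tMeet (tMeet x0 (tJoin x1 (B m.+1 x1))) (tJoin x1 (B m.+2 x0))) (tMeet x0 (tJoin x1 (B m.+1 x1))) (vv a b) E.
    by rewrite -IH HT in E; rewrite E.
have := H n; rewrite Tbig; last lia.
idE (tJoin x1 tZero) (tVar 1) (vv a b) E0; rewrite E0 => Ea; exact: esym Ea.
Qed.

Lemma eta_inj a b : PP_eq (@skel_dual A) (eta a) (eta b) -> a = b.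
Proof.
move=> H.
have HT : forall k, T k a = T k b.
  move=> k; suff E : Tk k a = Tk k b by exact: (f_equal sval E).
  apply: sep_skel => x Hx; rewrite (bitB x a k (k <= eta a x) (bitP x Hx a k)).
  by rewrite (bitB x b k (k <= eta b x) (bitP x Hx b k)) H.
have E1 := chainH _ _ HT; have E2 := chainH _ _ (fun k => esym (HT k)).
idE (tMeet x0 x1) (tMeet x1 x0) (vv a b) E; by rewrite -E1 E E2.
Qed.

Lemma T_idem a k : idem a -> 1 <= k <= n -> T k a = a.
Proof.
move=> Ha Hk.
have Hm : forall m, 0 < m -> eval (fun _ : nat => a) (tmul x0 m) = a.
  elim => [//|[|m] IH] _ /=.
  - by idE (tOplus x0 tZero) (tVar 0) (fun _ : nat => a) E.
  - by rewrite /= in IH; rewrite IH.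
have E : eval (fun _ : nat => a) (B k (tmul x0 n)) = eval (fun _ : nat => a) (tmul x0 n).
  apply: PLid => w Hw; have H0 := Hw 0; rewrite evalL_B // evalL_tmul //=.
  case: (posnP (w 0)) => [->|Hp]; first by rewrite muln0; case: ifP => //; lia.
  have := leq_pmulr n Hp.
  case: ifP; lia.
by rewrite eval_B Hm in E.
Qed.

Lemma count_const (b : bool) (s : seq nat) : count (fun _ => b) s = if b then size s else 0.
Proof. by case: b; elim: s => //= x s ->. Qed.

Section Univ.
Variables (d : Order.disp_t) (L : tbDistrLatticeType d) (f : A -> (L -> bool) -> nat).
Hypothesis Hf : PP_hom n (@lat_dual d L) f.

Lemma hom_eval y (Hy : lat_dual y) (v : nat -> A) t :
  f (eval v t) y = evalL n (fun i => f (v i) y) t.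
Proof.
have [[Hm Hj Ho Hp] [H0 H1]] := (proj2 Hf) y Hy.
elim: t => //= [s IHs u IHu|s IHs u IHu|s IHs u IHu|s IHs u IHu].
- by rewrite Hm IHs IHu.
- by rewrite Hj IHs IHu.
- by rewrite Ho IHs IHu.
- by rewrite Hp IHs IHu.
Qed.

Lemma f_le a y : lat_dual y -> f a y <= n.
Proof. by case: (proj1 Hf a) => H _ _; exact: H. Qed.

Lemma f_T k a y : lat_dual y -> f (T k a) y = if k <= f a y then n else 0.
Proof. move=> Hy; rewrite /T hom_eval // thrP // => i; exact: f_le. Qed.

Lemma gex (s : skel A) : exists l, forall y, lat_dual y -> (y l <-> f (sval s) y = n).
Proof. exact: rep (proj1 Hf (sval s)). Qed.

Definition g (s : skel A) : L := epsilon (inhabits \bot%O)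
  (fun l => forall y, lat_dual y -> (y l <-> f (sval s) y = n)).

Lemma ygE s y : lat_dual y -> y (g s) = (f (sval s) y == n).
Proof.
move=> Hy; have := epsilon_spec (inhabits \bot%O) _ (gex s) y Hy; rewrite -/(g s) => H.
by apply/idP/eqP => /H.
Qed.

Lemma g_hom : skel_lat_hom g.
Proof.
split.
- move=> s t u E; apply: sep_L => y Hy; have Hy' := Hy; case: Hy' => Ym _ _ _.
  rewrite Ym !ygE // E; have [[Hm _ _ _] _] := (proj2 Hf) y Hy; rewrite Hm.
  have := f_le (sval s) y Hy; have := f_le (sval t) y Hy.
  case: eqP => H1; case: eqP => H2; case: eqP => H3 //=; lia.
- move=> s t u E; apply: sep_L => y Hy; have Hy' := Hy; case: Hy' => _ Yj _ _.
  rewrite Yj !ygE // E; have [[_ Hj _ _] _] := (proj2 Hf) y Hy; rewrite Hj.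
  have := f_le (sval s) y Hy; have := f_le (sval t) y Hy.
  case: eqP => H1; case: eqP => H2; case: eqP => H3 //=; lia.
- move=> u E; apply: sep_L => y Hy; have Hy' := Hy; case: Hy' => _ _ Y0 _.
  rewrite Y0 !ygE // E; have [_ [H0 _]] := (proj2 Hf) y Hy; rewrite H0.
  by apply/eqP; lia.
- move=> u E; apply: sep_L => y Hy; have Hy' := Hy; case: Hy' => _ _ _ Y1.
  rewrite Y1 !ygE // E; have [_ [_ H1]] := (proj2 Hf) y Hy; rewrite H1.
  by apply/eqP.
Qed.

Lemma g_factor a y : lat_dual y -> f a y = eta a (fun s => y (g s)).
Proof.
move=> Hy; rewrite /eta; symmetry; apply: count_thr; first exact: f_le.
move=> k Hk; rewrite ygE //= f_T //.
by case: leqP => H; [rewrite eqxx | apply/eqP; lia].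
Qed.

Lemma ygen (g0 : skel A -> L) : (forall a y, lat_dual y -> f a y = eta a (fun s => y (g0 s))) ->
  forall s y, lat_dual y -> y (g0 s) = (f (sval s) y == n).
Proof.
move=> H s y Hy; rewrite H // /eta (@eq_in_count _ _ (fun _ => y (g0 s))); last first.
  move=> k; rewrite mem_iota => Hk /=.
  by have -> : Tk k (sval s) = s by apply: skel_eq; apply: T_idem; [exact: (proj2_sig s) | lia].
rewrite count_const size_iota; case: (y (g0 s)); first by rewrite eqxx.
by apply/esym/eqP; lia.
Qed.

End Univ.

End Alg.

Theorem corollary4p8 (n : nat) (hn : (1 <= n)%N) (A : pmvAlg) :
  in_PMV n A ->
  exists eta : A -> (skel A -> bool) -> nat,
    is_unit n eta /\
    (forall a b : A, PP_eq (@skel_dual A) (eta a) (eta b) -> a = b).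
Proof.
move=> HA; exists (@eta n hn A HA); split; last exact: (@eta_inj n hn A HA).
split; first exact: (@eta_hom n hn A HA).
move=> d L f Hf; exists (@g n A d L f); split.
- exact: (@g_hom n hn A d L f Hf).
- exact: (@g_factor n hn A HA d L f Hf).
- move=> g' _ Hg' s; apply: sep_L => y Hy.
  by rewrite (@ygen n hn A HA d L f g' Hg') // (@ygen n hn A HA d L f _ (@g_factor n hn A HA d L f Hf)).
Qed.
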